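(* For every $n\geq 1$, \[ \mathcal{P}_n=\left\{1^k0^{n-p-k}1^p \;\middle|\; 0\leq p\leq n-1,\ 0\leq k\leq n-p-1\right\}\cup\left\{1^n\right\}. \]
   Context: For an integer $m\geq 0$, $\mathcal{L}_m$ is the line $y=mx-m^2$, $H_m(x,y)=y-mx+m^2$, $\mathcal{H}_m^+=\{H_m>0\}$ (the side containing $(-1,1)$) and $\mathcal{H}_m^-=\{H_m<0\}$. For $n\geq 0$, the regions of the arrangement of $\mathcal{L}_0,\dots,\mathcal{L}_{n-1}$ are the connected components of $\mathbb{R}^2\setminus(\mathcal{L}_0\cup\dots\cup\mathcal{L}_{n-1})$. Each region lies, for each $i$, entirely in $\mathcal{H}_i^+$ or entirely in $\mathcal{H}_i^-$; its code is the binary word $\sigma_0\sigma_1\cdots\sigma_{n-1}$ with $\sigma_i=1$ if the region lies in $\mathcal{H}_i^+$ and $\sigma_i=0$ if it lies in $\mathcal{H}_i^-$. $\mathcal{P}_n$ is the set of codes of the regions of this arrangement. Words are concatenated; $\sigma^k$ denotes $k$ consecutive copies of the letter $\sigma$, with $\sigma^k$ the empty word for $k\leq 0$. *)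

(* Defs.v *)
From HB Require Import structures.
From mathcomp Require Import all_boot all_order all_algebra.
From mathcomp Require Import all_classical all_reals all_analysis.
Import numFieldNormedType.Exports.
Set Implicit Arguments. Unset Strict Implicit. Unset Printing Implicit Defensive.
Import Order.TTheory GRing.Theory Num.Theory.
Local Open Scope classical_set_scope.
Local Open Scope ring_scope.

Definition Hline {R : realType} (m : nat) (p : R * R) : R :=
  p.2 - m%:R * p.1 + (m%:R) ^+ 2.

Definition arr_complement {R : realType} (n : nat) : set (R * R) :=
  [set p | forall i : nat, (i < n)%N -> Hline i p != 0].

Definition arr_region {R : realType} (n : nat) (C : set (R * R)) : Prop :=
  exists2 x : R * R, arr_complement n x & C = @connected_component (R * R)%type (@arr_complement R n) x.

(* codes: words sigma_0 ... sigma_{n-1} over bool (true = 1, false = 0),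
   sigma_i = 1 iff the region lies in H_i^+ *)
Definition is_code_of {R : realType} (n : nat) (C : set (R * R)) (w : seq bool) : Prop :=
  size w = n /\
  forall p, C p -> forall i : nat, (i < n)%N -> nth false w i = (0 < Hline i p).

Definition Pcodes (R : realType) (n : nat) : set (seq bool) :=
  [set w | exists C : set (R * R), arr_region n C /\ is_code_of n C w].

Definition Pformula (n : nat) : set (seq bool) :=
  [set w | exists p k : nat, (p <= n - 1)%N /\ (k <= n - p - 1)%N /\
             w = nseq k true ++ nseq (n - p - k) false ++ nseq p true]
  `|` [set nseq n true].

(* Main.v *)
Require Import Defs.
From HB Require Import structures.
From mathcomp Require Import all_boot all_order all_algebra.
From mathcomp Require Import all_classical all_reals all_analysis.
From mathcomp Require Import zify ring lra.
Import numFieldNormedType.Exports.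
Import Order.TTheory GRing.Theory Num.Theory.
Local Open Scope classical_set_scope.
Local Open Scope ring_scope.
Lemma Hline_cont (R : realType) (m : nat) : continuous (@Hline R m).
Proof.
move=> x; rewrite /Hline.
have cf : (fun p : R * R => p.1) @ x --> x.1 by exact: cvg_fst.
have cs : (fun p : R * R => p.2) @ x --> x.2 by exact: cvg_snd.
apply: cvgD; last exact: cvg_cst.
apply: cvgB => //.
apply: cvgM => //; exact: cvg_cst.
Qed.
Lemma conn_sign_half (R : realType) (T : topologicalType) (A : set T) (f : T -> R)
  (S : set R) : connected A -> continuous f -> open S -> open (~` S `\ 0) ->
  (forall q, A q -> f q != 0) -> forall x p, A x -> A p -> S (f x) -> S (f p).
Proof.
move=> cA cf oS oS' nz x p Ax Ap Sx.
have E : A `&` f @^-1` S = A.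
  apply: cA.
  - by exists x.
  - exists (f @^-1` S) => //; apply: open_comp => // y _; exact: cf.
  - exists (~` (f @^-1` (~` S `\ 0))).
      apply: open_closedC; apply: open_comp => // y _; exact: cf.
    apply/seteqP; split => q [Aq Hq]; split => //=.
      by move=> [] /(_ Hq).
    apply: contrapT => nS; apply: Hq; split => //=.
    by move=> /eqP; rewrite (negbTE (nz q Aq)).
by move: Ap; rewrite -E => -[].
Qed.

Lemma conn_sign (R : realType) (T : topologicalType) (A : set T) (f : T -> R) :
  connected A -> continuous f ->
  (forall q, A q -> f q != 0) -> forall x p, A x -> A p -> (0 < f p) = (0 < f x).
Proof.
move=> cA cf nz x p Ax Ap.
have opos : open [set y : R | 0 < y] by exact: open_gt.
have oneg : open [set y : R | y < 0] by exact: open_lt.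
have e1 : ~` [set y : R | 0 < y] `\ 0 = [set y | y < 0].
  apply/seteqP; split => y /=.
    by move=> [] /negP; rewrite -leNgt le_eqVlt => /orP[/eqP->|].
  by move=> yl; split; [apply/negP; rewrite -leNgt ltW | move=> y0; move: yl; rewrite y0 ltxx].
have e2 : ~` [set y : R | y < 0] `\ 0 = [set y | 0 < y].
  apply/seteqP; split => y /=.
    by move=> [] /negP; rewrite -leNgt le_eqVlt eq_sym => /orP[/eqP->|].
  by move=> yl; split; [apply/negP; rewrite -leNgt ltW | move=> y0; move: yl; rewrite y0 ltxx].
have [fx|fx] := ltP 0 (f x).
  by apply/idP; apply: (@conn_sign_half R T A f [set y : R | 0 < y] cA cf opos _ nz x p Ax Ap fx); rewrite e1.
have fx' : f x < 0 by rewrite lt_neqAle fx (nz x Ax).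
have := @conn_sign_half R T A f [set y : R | y < 0] cA cf oneg _ nz x p Ax Ap fx'.
rewrite e2 => /(_ opos) /= fp.
by apply/negbTE; rewrite -leNgt ltW.
Qed.
Lemma comb (n : nat) (w : seq bool) : size w = n ->
  (forall i j l, (i <= j)%N -> (j <= l)%N -> (l < n)%N ->
     ~~ nth false w i -> ~~ nth false w l -> ~~ nth false w j) ->
  Pformula n w.
Proof.
move=> sw cv.
case: (boolP (has negb w)) => hw; last first.
  right; rewrite /= -sw; apply/all_pred1P/allP => b bw.
  apply: contraNT hw => hb; apply/hasP; exists b => //.
  by move: hb bw; case: b.
set k := find negb w.
set p := find negb (rev w).
have kn : (k < n)%N by rewrite -sw -has_find.
have pn : (p < n)%N by rewrite -sw -size_rev -has_find has_rev.
have wk : ~~ nth false w k by exact: nth_find.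
have wq : ~~ nth false w (n - p.+1).
  have := nth_find false (a := negb) (s := rev w).
  by rewrite has_rev nth_rev ?size_rev sw //; apply.
have bk i : (i < k)%N -> nth false w i.
  by move=> ik; have := before_find false ik; by move/negbFE.
have aq i : (n - p.+1 < i)%N -> (i < n)%N -> nth false w i.
  move=> qi iN.
  have e : nth false w i = nth false (rev w) (n - i.+1).
    rewrite nth_rev ?size_rev sw; last by lia.
    congr nth; lia.
  rewrite e; have := @before_find _ false negb (rev w) (n - i.+1).
  move=> h; apply/negbFE; apply: h; rewrite -/p; lia.
have kq : (k <= n - p.+1)%N.
  rewrite leqNgt; apply/negP => qk; move: wk; rewrite aq //.
left; exists p, k; split; first by lia.
split; first by lia.
apply: (@eq_from_nth _ false).
  rewrite sw !size_cat !size_nseq; lia.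
move=> i; rewrite sw => iN.
rewrite nth_cat size_nseq nth_nseq.
case: ltnP => ik; first by rewrite bk.
rewrite nth_cat size_nseq nth_nseq.
case: ltnP => ik2.
  apply/negbTE; apply: (cv k i (n - p.+1)%N) => //; lia.
rewrite nth_nseq; case: ltnP => ik3; last by lia.
apply: aq => //; lia.
Qed.
Lemma conv_real (R : realType) (a b c x y : R) : a <= b -> b <= c ->
  y - a * x + a ^+ 2 < 0 -> y - c * x + c ^+ 2 < 0 -> y - b * x + b ^+ 2 < 0.
Proof.
move=> ab bc ha hc.
have [->|nba] := eqVneq b a; first by [].
have [->|nbc] := eqVneq b c; first by [].
have ab' : a < b by rewrite lt_neqAle eq_sym nba.
have bc' : b < c by rewrite lt_neqAle nbc.
have id : (c - a) * (y - b * x + b ^+ 2) =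
  (c - b) * (y - a * x + a ^+ 2) + (b - a) * (y - c * x + c ^+ 2) - (c - a) * (b - a) * (c - b) by ring.
have : (c - a) * (y - b * x + b ^+ 2) < 0.
  rewrite id; move: (y - a * x + a ^+ 2) (y - c * x + c ^+ 2) ha hc => A C ha hc.
  have h1 : (c - b) * A < 0 by rewrite pmulr_rlt0 // subr_gt0.
  have h2 : (b - a) * C < 0 by rewrite pmulr_rlt0 // subr_gt0.
  have h3 : 0 <= (c - a) * (b - a) * (c - b) by rewrite !mulr_ge0 // subr_ge0 // ltW // (lt_trans ab').
  move: ((c - b) * A) ((b - a) * C) ((c - a) * (b - a) * (c - b)) h1 h2 h3 => P Q S; lra.
have ca : 0 < c - a by rewrite subr_gt0 (lt_trans ab').
by rewrite pmulr_rlt0.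
Qed.

Lemma nth_form (k p n i : nat) : (k + p < n)%N -> (i < n)%N ->
  nth false (nseq k true ++ nseq (n - p - k) false ++ nseq p true) i =
  (i < k)%N || (n - p <= i)%N.
Proof.
move=> h iN.
rewrite nth_cat size_nseq nth_nseq.
case: ltnP => ik; first by [].
rewrite nth_cat size_nseq nth_nseq.
case: ltnP => ik2; first by apply/esym/negbTE; rewrite -ltnNge; lia.
rewrite nth_nseq; case: ltnP => ik3; last by lia.
by apply/esym; apply/orP; right; lia.
Qed.

Lemma fs_lt (R : realType) (c m : nat) : (m < c)%N -> (m%:R : R) - (c%:R - 2^-1) < 0.
Proof.
move=> mc; have : (m.+1%:R : R) <= c%:R by rewrite ler_nat.
rewrite -addn1 natrD => h.
have h2 : (0 : R) < 2^-1 by rewrite invr_gt0.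
have h3 : (2^-1 : R) < 1 by rewrite invf_lt1 // ltr1n.
lra.
Qed.

Lemma fs_ge (R : realType) (c m : nat) : (c <= m)%N -> 0 < (m%:R : R) - (c%:R - 2^-1).
Proof.
move=> mc; have : (c%:R : R) <= m%:R by rewrite ler_nat.
have h2 : (0 : R) < 2^-1 by rewrite invr_gt0.
lra.
Qed.

Lemma witness (R : realType) (n : nat) (w : seq bool) : Pformula n w ->
  size w = n /\ exists X : R * R, arr_complement n X /\
    forall i, (i < n)%N -> nth false w i = (0 < Hline i X).
Proof.
case=> [[p [k [pn [kn ->]]]] | ->].
  split; first by rewrite !size_cat !size_nseq; lia.
  pose r1 : R := k%:R - 2^-1.
  pose r2 : R := (n - p)%:R - 2^-1.
  have HX m : Hline m (r1 + r2, r1 * r2) = (m%:R - r1) * (m%:R - r2).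
    by rewrite /Hline /=; ring.
  have key m : (Hline m (r1 + r2, r1 * r2) != 0) /\
     ((0 < Hline m (r1 + r2, r1 * r2)) = (m < k)%N || (n - p <= m)%N).
    rewrite HX.
    case: (ltnP m k) => mk.
      have h1 := @fs_lt R _ _ mk.
      have h2 : (m%:R : R) - r2 < 0 by apply: fs_lt; lia.
      move: (m%:R - r1) (m%:R - r2) h1 h2 => u v h1 h2.
      have : 0 < u * v by nra.
      by move=> h; rewrite h (gt_eqF h).
    have h1 := @fs_ge R _ _ mk.
    case: (ltnP m (n - p)) => mp.
      have h2 : (m%:R : R) - r2 < 0 by apply: fs_lt.
      move: (m%:R - r1) (m%:R - r2) h1 h2 => u v h1 h2.
      have : u * v < 0 by nra.
      by move=> h; rewrite (lt_eqF h) ltNge ltW.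
    have h2 : 0 < (m%:R : R) - r2 by apply: fs_ge.
    move: (m%:R - r1) (m%:R - r2) h1 h2 => u v h1 h2.
    have : 0 < u * v by nra.
    by move=> h; rewrite h (gt_eqF h).
  exists (r1 + r2, r1 * r2); split.
    by move=> i _; case: (key i).
  move=> i iN; rewrite nth_form //; last by lia.
  by case: (key i).
split; first by rewrite size_nseq.
exists (0, 1); split.
  move=> i _; rewrite /Hline /= mulr0 subr0.
  have := sqr_ge0 (i%:R : R); move: (i%:R ^+ 2) => s hs.
  apply/negP => /eqP; lra.
move=> i iN; rewrite nth_nseq iN /Hline /= mulr0 subr0.
have := sqr_ge0 (i%:R : R); move: (i%:R ^+ 2) => s hs.
apply/esym/idP; lra.
Qed.

Theorem corollary19 (R : realType) (n : nat) : (1 <= n)%N ->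
  Pcodes R n = Pformula n.
Proof.
move=> n1; apply/seteqP; split => w.
  move=> [C [[x cx ->] [sw hw]]].
  have xC := connected_component_refl cx.
  have hx i : (i < n)%N -> nth false w i = (0 < Hline i x).
    by move=> hi; exact: hw x xC i hi.
  apply: comb sw _ => i j l ij jl ln.
  have neg m : (m < n)%N -> ~~ nth false w m -> Hline m x < 0.
    move=> mn; rewrite hx // -leNgt le_eqVlt => /orP[/eqP e|//].
    by move: (cx m mn); rewrite e eqxx.
  move=> /(neg _ (leq_ltn_trans (leq_trans ij jl) ln)) hi /(neg _ ln) hl.
  rewrite hx ?(leq_ltn_trans jl ln) // -leNgt ltW //.
  move: hi hl; rewrite /Hline => hi hl.
  apply: (@conv_real R i%:R j%:R l%:R x.1 x.2 _ _ hi hl); by rewrite ler_nat.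
move=> /(witness R) [sw [X [cX hX]]].
exists (connected_component (arr_complement n) X); split; first by exists X.
split => // q Cq i iN.
rewrite hX //; apply/esym.
have nz : forall q', connected_component (arr_complement n) X q' -> Hline i q' != 0.
  by move=> q' /connected_component_sub; apply.
exact: (@conn_sign R _ _ (@Hline R i) (@component_connected _ (arr_complement n) X)
  (@Hline_cont R i) nz X q (connected_component_refl cX) Cq).
Qed.
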